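(* Let $p+q=4k+2$ with $k\ge1$. (i) If $p,q$ are odd, $p\ge1$ and $q\ge5$, then $\mathbb{O}_{p,q}\simeq\mathbb{O}_{p+4,q-4}$. (ii) If $p,q$ are even, $p\ge4$ and $q\ge2$, then $\mathbb{O}_{p,q}\simeq\mathbb{O}_{p-2,q+2}$. (The isomorphisms preserve the $\mathbb{Z}_2^n$-graded structure.)
   Context: $\mathbb{Z}_2=\{0,1\}$. For $p+q=n\ge3$, $\mathbb{O}_{p,q}$ is the real algebra with basis $\{u_x: x\in\mathbb{Z}_2^n\}$ and product $u_x\cdot u_y=(-1)^{f(x,y)}u_{x+y}$, where $f(x,y)=\sum_{1\le i<j<k\le n}(x_ix_jy_k+x_iy_jx_k+y_ix_jx_k)+\sum_{1\le i\le j\le n}x_iy_j+\sum_{1\le i\le p}x_iy_i$. Homogeneous elements are scalar multiples of some $u_x$. *)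

(* Defs.v *)
From HB Require Import structures.
From mathcomp Require Import all_boot all_order all_algebra.
From mathcomp Require Import Rstruct.
From Stdlib Require Rdefinitions.
Notation R := Rdefinitions.R.
Set Implicit Arguments. Unset Strict Implicit. Unset Printing Implicit Defensive.
Import Order.TTheory GRing.Theory Num.Theory.

(* Z_2^n : boolean vectors indexed by 'I_n (index i : 'I_n stands for i+1). *)
Definition bv (n : nat) := {ffun 'I_n -> bool}.

Definition bvadd n (x y : bv n) : bv n := [ffun i => x i (+) y i].

(* the twisting function f(x,y) in Z_2 (as a parity bit), for signature p
   (q = n - p); indices are 0-based, so 1<=i<=p becomes i < p. *)
Definition ftw (n p : nat) (x y : bv n) : bool :=
  odd (\sum_(i < n) \sum_(j < n) \sum_(k < n)
          ((i < j < k) * (x i * x j * y k + x i * y j * x k + y i * x j * x k))%N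
       + \sum_(i < n) \sum_(j < n) ((i <= j) * (x i * y j))%N
       + \sum_(i < n) ((i < p) * (x i * y i))%N)%N.

Local Open Scope ring_scope.

(* The algebra O_{p,q} (n = p + q): elements are real coefficient functions
   on the basis {u_x : x in Z_2^n}. *)
Definition Oalg (n : nat) := {ffun bv n -> R}.

Definition ubasis n (x : bv n) : Oalg n := [ffun z => if z == x then 1 else 0].

Definition oscale n (c : R) (a : Oalg n) : Oalg n := [ffun z => c * a z].

(* bilinear product determined by u_x . u_y = (-1)^f(x,y) u_{x+y} *)
Definition omul (n p : nat) (a b : Oalg n) : Oalg n :=
  [ffun z => \sum_(x : bv n) a x * b (bvadd x z) * (-1) ^+ ftw p x (bvadd x z)].

Definition graded_iso (n p p' : nat) : Prop :=
  exists (phi : Oalg n -> Oalg n) (psi : bv n -> bv n),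
    (forall a b, phi (a + b) = phi a + phi b) /\
    (forall (c : R) (a : Oalg n), phi (oscale c a) = oscale c (phi a)) /\
    bijective phi /\
    (forall a b, phi (omul p a b) = omul p' (phi a) (phi b)) /\
    bijective psi /\
    (forall x y, psi (bvadd x y) = bvadd (psi x) (psi y)) /\
    (forall x, exists c : R, phi (ubasis x) = oscale c (ubasis (psi x))).

(* Main.v *)
From Stdlib Require Import Btauto.
Require Import Defs.
From mathcomp Require Import all_boot all_algebra.
From mathcomp Require Import zify.
From mathcomp Require Import Rstruct.
From mathcomp Require Import ring.
Set Implicit Arguments. Unset Strict Implicit. Unset Printing Implicit Defensive.

Lemma addbX a b : a (+) b = xorb a b. Proof. by case: a; case: b. Qed.

Lemma odd_sum (I : Type) (r : seq I) (P : pred I) (F : I -> nat) :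
  odd (\sum_(i <- r | P i) F i) = \big[addb/false]_(i <- r | P i) odd (F i).
Proof. by apply: (big_morph odd oddD). Qed.

Lemma bin2D a b : 'C(a + b, 2) = 'C(a, 2) + 'C(b, 2) + a * b.
Proof.
elim: b => [|b IH]; first by rewrite addn0 muln0 bin0n addn0 addn0.
rewrite addnS binS IH bin1 binS bin1 mulnS; lia.
Qed.

Section Atoms.
Variable n : nat.
Implicit Types (x y z u : bv n) (A P U : pred nat).

Definition cnt A x : nat := \sum_(i < n | A i) (x i : nat).
Definition eA A x := odd (cnt A x).
Definition cA A x := odd 'C(cnt A x, 2).
Definition dA A x y := \big[addb/false]_(i < n | A i) (x i && y i).
Definition Bb x y := \big[addb/false]_(i < n) \big[addb/false]_(j < n) ((i <= j) && x i && y j).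
Definition T : pred nat := predT.
Definition FS P x y :=
  (eA T y && cA T x) (+) (~~ eA T x && dA T x y) (+) Bb x y (+) dA P x y.

Lemma eAE A x : eA A x = \big[addb/false]_(i < n | A i) x i.
Proof. by rewrite /eA /cnt odd_sum; apply: eq_bigr => i _; case: (x i). Qed.

Lemma eA_add A x y : eA A (bvadd x y) = eA A x (+) eA A y.
Proof. by rewrite !eAE -big_split; apply: eq_bigr => i _; rewrite ffunE. Qed.

Lemma dA_addl A x y z : dA A (bvadd x y) z = dA A x z (+) dA A y z.
Proof. by rewrite /dA -big_split; apply: eq_bigr => i _; rewrite ffunE andb_addl. Qed.

Lemma dA_sym A x y : dA A x y = dA A y x.
Proof. by apply: eq_bigr => i _; rewrite andbC. Qed.

Lemma dA_addr A x y z : dA A z (bvadd x y) = dA A z x (+) dA A z y.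
Proof. by rewrite !(dA_sym _ z) dA_addl. Qed.

Lemma dA_diag A x : dA A x x = eA A x.
Proof. by rewrite eAE; apply: eq_bigr => i _; rewrite andbb. Qed.

Lemma dA_xor P U x y : dA (fun i => P i (+) U i) x y = dA P x y (+) dA U x y.
Proof.
rewrite /dA big_mkcond [X in X (+) _]big_mkcond [X in _ (+) X]big_mkcond -big_split /=.
by apply: eq_bigr => i _; case: (P i); case: (U i); case: (x i && y i).
Qed.

Lemma Bb_addl x y z : Bb (bvadd x y) z = Bb x z (+) Bb y z.
Proof.
rewrite /Bb -big_split; apply: eq_bigr => i _; rewrite -big_split.
by apply: eq_bigr => j _; rewrite ffunE /=; case: (i <= j); case: (x i); case: (y i); case: (z j).
Qed.

Lemma Bb_addr x y z : Bb z (bvadd x y) = Bb z x (+) Bb z y.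
Proof.
rewrite /Bb -big_split; apply: eq_bigr => i _; rewrite -big_split.
by apply: eq_bigr => j _; rewrite ffunE /=; case: (i <= j); case: (z i); case: (x j); case: (y j).
Qed.


Definition dN A x y : nat := \sum_(i < n | A i) ((x i && y i) : nat).

Lemma odd_dN A x y : odd (dN A x y) = dA A x y.
Proof. by rewrite /dN odd_sum; apply: eq_bigr => i _; case: (x i && y i). Qed.

Lemma cnt_add A x y : cnt A (bvadd x y) + 2 * dN A x y = cnt A x + cnt A y.
Proof.
rewrite /cnt /dN big_distrr -!big_split /=; apply: eq_bigr => i _.
by rewrite ffunE; case: (x i); case: (y i).
Qed.

Lemma cA_add A x y :
  cA A (bvadd x y) = cA A x (+) cA A y (+) (eA A x && eA A y) (+) dA A x y.
Proof.
have E := cnt_add A x y.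
rewrite /cA /eA -odd_dN.
have := congr1 (fun t => odd (binomial t 2)) E => /=.
rewrite bin2D [X in _ = odd X -> _]bin2D mul2n -addnn bin2D !oddD !oddM addbb /=.
rewrite addnn odd_double andbF addbF andbb => <-.
by rewrite -addbA addbb addbF.
Qed.


Lemma cntT z : cnt T z = \sum_(i < n) (z i : nat).
Proof. by []. Qed.

Lemma pair_sum z :
  \sum_(a < n) \sum_(b < n) ((a < b) * (z a * z b)) = 'C(cnt T z, 2).
Proof.
set S := \sum_(a < n) _.
have Hsq : cnt T z * cnt T z = \sum_(a < n) \sum_(b < n) (z a * z b).
  by rewrite cntT big_distrl; apply: eq_bigr => a _; rewrite big_distrr.
have Hsplit : \sum_(a < n) \sum_(b < n) (z a * z b) =
   S + \sum_(a < n) \sum_(b < n) ((b < a) * (z a * z b)) + cnt T z.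
  rewrite cntT /S -!big_split /=; apply: eq_bigr => a _.
  rewrite -!big_split /= (bigD1 a) //= [X in _ = X + _](bigD1 a) //= ltnn /=.
  rewrite !mul0n !add0n [in RHS]addnC; congr (_ + _); first by case: (z a).
  apply: eq_bigr => b Hb.
  case: (ltngtP a b) => [_|_|e]; rewrite ?mul1n ?mul0n ?addn0 ?add0n //.
  by move: Hb; rewrite (val_inj e) eqxx.
have HS : \sum_(a < n) \sum_(b < n) ((b < a) * (z a * z b)) = S.
  rewrite /S exchange_big; apply: eq_bigr => a _; apply: eq_bigr => b _.
  by congr (_ * _); rewrite mulnC.
rewrite HS in Hsplit.
rewrite bin2; move: Hsq; rewrite Hsplit => H.
have E : cnt T z * (cnt T z).-1 = S + S.
  by move: H; case: (cnt T z) => [|w] /= H; nia.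
by rewrite E addnn doubleK.
Qed.


Lemma BbN x y : Bb x y = odd (\sum_(i < n) \sum_(j < n) ((i <= j) * (x i * y j))).
Proof.
rewrite odd_sum; apply: eq_bigr => i _; rewrite odd_sum; apply: eq_bigr => j _.
by case: (i <= j); case: (x i); case: (y j).
Qed.

Lemma Bb_diag z : Bb z z = cA T z (+) eA T z.
Proof.
rewrite BbN /cA /eA -pair_sum -oddD; congr odd.
rewrite cntT -big_split /=; apply: eq_bigr => a _.
rewrite (bigD1 a) // [X in _ = X + _](bigD1 a) //= leqnn ltnn /= mul0n add0n mul1n.
rewrite addnC; congr (_ + _); last by case: (z a).
apply: eq_bigr => b Hb; rewrite leq_eqVlt.
suff -> : (a == b :> nat) = false by [].
by apply/eqP => e; move: Hb; rewrite (val_inj e) eqxx.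
Qed.

Lemma Bb_swap x y : Bb x y (+) Bb y x = (eA T x && eA T y) (+) dA T x y.
Proof.
rewrite /Bb [X in _ (+) X]exchange_big -big_split /= !eAE /dA /T /= big_distrl -big_split /=.
apply: eq_bigr => i _; rewrite -big_split /= big_distrr /= (bigD1 i) // [X in _ = X (+) _](bigD1 i) //=.
rewrite leqnn /=.
have -> : \big[addb/false]_(j < n | j != i)
            ((i <= j) && x i && y j (+) (j <= i) && y j && x i)
          = \big[addb/false]_(j < n | j != i) (x i && y j).
  apply: eq_bigr => j Hj.
  have Hne : (i <= j) (+) (j <= i).
    case: (ltngtP i j) => [h|h|e] //.
    by move: Hj; rewrite (val_inj e) eqxx.
  by move: Hne; case: (i <= j); case: (j <= i); case: (x i); case: (y j).
by rewrite (andbC (y i)) addbb addFb [RHS]addbC addbA addbb addFb.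
Qed.

Definition ind (V : pred nat) : bv n := [ffun i : 'I_n => V i].

Lemma dA_ind_compl x U : dA T x (ind (predC U)) = eA T x (+) eA U x.
Proof.
rewrite /dA !eAE [X in _ = _ (+) X]big_mkcond -big_split /=; apply: eq_bigr => i _.
by rewrite ffunE /=; case: (U i); case: (x i).
Qed.

Lemma eA_ind_compl U : eA U (ind (predC U)) = false.
Proof. by rewrite eAE big1 // => i Ui; rewrite ffunE /= Ui. Qed.

Lemma cnt_ind A V : cnt A (ind V) = count (fun i => A i && V i) (iota 0 n).
Proof.
rewrite /cnt -sum1_count.
have -> : iota 0 n = index_iota 0 n by rewrite /index_iota subn0.
rewrite big_mkord.
rewrite big_mkcond [RHS]big_mkcond; apply: eq_bigr => i _.
by rewrite ffunE; case: (A i); case: (V i).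
Qed.


Lemma ptw (a b m : nat) (xa xb ym : bool) :
  ym * ((a < b) * ((xa && (a != m)) * (xb && (b != m)))) =
  (a < b < m) * (xa * xb * ym) + (a < m < b) * (xa * ym * xb) + (m < a < b) * (ym * xa * xb).
Proof.
case: xa; case: xb; case: ym; rewrite /= ?muln0 ?mul0n ?muln1 ?mul1n ?addn0 //.
case: (ltngtP a b); case: (ltngtP a m); case: (ltngtP b m) => //=; lia.
Qed.

Lemma sum3_split (F G H : 'I_n -> 'I_n -> 'I_n -> nat) :
  \sum_(i < n) \sum_(j < n) \sum_(k < n) (F i j k + G i j k + H i j k) =
  \sum_(i < n) \sum_(j < n) \sum_(k < n) F i j k +
  \sum_(i < n) \sum_(j < n) \sum_(k < n) G i j k +
  \sum_(i < n) \sum_(j < n) \sum_(k < n) H i j k.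
Proof.
rewrite -!big_split; apply: eq_bigr => i _; rewrite -!big_split; apply: eq_bigr => j _.
by rewrite -!big_split.
Qed.

Lemma sum3_rot (F : 'I_n -> 'I_n -> 'I_n -> nat) :
  \sum_(i < n) \sum_(j < n) \sum_(k < n) F i j k =
  \sum_(k < n) \sum_(i < n) \sum_(j < n) F i j k.
Proof.
transitivity (\sum_(i < n) \sum_(k < n) \sum_(j < n) F i j k).
  by apply: eq_bigr => i _; exact: exchange_big.
exact: exchange_big.
Qed.

Definition mask x (m : 'I_n) : bv n := [ffun a : 'I_n => x a && (a != m)].

Lemma cubic_sum x y :
  \sum_(i < n) \sum_(j < n) \sum_(k < n)
     ((i < j < k) * (x i * x j * y k + x i * y j * x k + y i * x j * x k)) =
  \sum_(m < n) (y m * 'C(cnt T (mask x m), 2)).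
Proof.
symmetry.
under eq_bigr => m _ do rewrite -pair_sum big_distrr /=.
under eq_bigr => m _ do under eq_bigr => a _ do rewrite big_distrr /=.
under eq_bigr => m _ do under eq_bigr => a _ do under eq_bigr => b _ do
  rewrite !ffunE ptw.
rewrite sum3_split; symmetry.
under eq_bigr => i _ do under eq_bigr => j _ do under eq_bigr => k _ do
  rewrite !mulnDr.
rewrite sum3_split sum3_rot [X in _ + X + _]exchange_big.
reflexivity.
Qed.


Lemma mask_cnt x m : cnt T (mask x m) + x m = cnt T x.
Proof.
rewrite !cntT (bigD1 m) //= [in RHS](bigD1 m) //= ffunE eqxx andbF add0n addnC.
by congr (_ + _); apply: eq_bigr => i Hi; rewrite ffunE Hi andbT.
Qed.

Lemma term_par x y m :
  odd (y m * 'C(cnt T (mask x m), 2)) = y m && (cA T x (+) (x m && ~~ eA T x)).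
Proof.
have H := mask_cnt x m.
rewrite oddM; case: (y m) => //=; rewrite /cA /eA -H.
case: (x m) => /=; last by rewrite addn0 addbF.
by rewrite bin2D /= addn0 muln1 oddD addn1 /= negbK -addbA addbb addbF.
Qed.

Lemma cubic_par x y :
  odd (\sum_(i < n) \sum_(j < n) \sum_(k < n)
     ((i < j < k) * (x i * x j * y k + x i * y j * x k + y i * x j * x k))) =
  (eA T y && cA T x) (+) (~~ eA T x && dA T x y).
Proof.
rewrite cubic_sum odd_sum.
under eq_bigr => m _ do rewrite term_par andb_addr.
rewrite big_split /= !eAE /dA /T /= big_distrl /=; congr (_ (+) _).
rewrite big_distrr /=; apply: eq_bigr => i _.
by case: (x i); case: (y i); case: (~~ _).
Qed.

End Atoms.

Lemma ftw_FS n p (x y : bv n) : ftw p x y = FS (fun i => i < p) x y.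
Proof.
rewrite /ftw /FS !oddD cubic_par -BbN; congr (_ (+) _).
rewrite odd_sum /dA [RHS]big_mkcond /=; apply: eq_bigr => i _.
by case: (i < p); case: (x i); case: (y i).
Qed.
Section Step.
Variable n : nat.
Implicit Types (x y z u : bv n) (A P U : pred nat).

Definition cequiv P P' := exists (psi : bv n -> bv n) (s : bv n -> bool),
  (forall x y, psi (bvadd x y) = bvadd (psi x) (psi y)) /\ bijective psi /\
  (forall x y, FS P' (psi x) (psi y) = FS P x y (+) s x (+) s y (+) s (bvadd x y)).

Lemma bvaddC x y : bvadd x y = bvadd y x.
Proof. by apply/ffunP => i; rewrite !ffunE addbC. Qed.
Lemma bvaddA x y z : bvadd x (bvadd y z) = bvadd (bvadd x y) z.
Proof. by apply/ffunP => i; rewrite !ffunE addbA. Qed.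
Lemma bvaddK x y : bvadd (bvadd x y) y = x.
Proof. by apply/ffunP => i; rewrite !ffunE addbK. Qed.

Lemma Bb_flip u y : Bb u y = Bb y u (+) (eA T y && eA T u) (+) dA T y u.
Proof. by rewrite -addbA -Bb_swap addbA addbb addFb. Qed.

Lemma cequiv_trans P1 P2 P3 : cequiv P1 P2 -> cequiv P2 P3 -> cequiv P1 P3.
Proof.
move=> [f [s [fA [fB fS]]]] [g [t [gA [gB gS]]]].
exists (g \o f), (fun x => s x (+) t (f x)); split; [|split].
- by move=> x y /=; rewrite fA gA.
- exact: bij_comp.
- move=> x y /=; rewrite gS fS fA !addbX; btauto.
Qed.

Lemma step P U :
  eA T (ind n (predC U)) = false -> cA T (ind n (predC U)) = true ->
  eA (fun i => P i (+) U i) (ind n (predC U)) = true ->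
  cequiv P (fun i => P i (+) U i).
Proof.
set u := ind n (predC U) => he hc hk.
have hUu : eA U u = false by exact: eA_ind_compl.
pose psi x := if eA U x then bvadd x u else x.
pose s x := cA U x (+) (eA U x && (Bb x u (+) dA (fun i => P i (+) U i) x u)).
have psiA : forall x y, psi (bvadd x y) = bvadd (psi x) (psi y).
  move=> x y; rewrite /psi eA_add.
  case: (eA U x); case: (eA U y) => //=;
  by apply/ffunP => i; rewrite !ffunE !addbX; btauto.
have psiK : cancel psi psi.
  move=> x; rewrite /psi; case Hx: (eA U x); last by rewrite Hx.
  by rewrite eA_add Hx hUu /= bvaddK.
exists psi, s; split; first exact: psiA.
split; first by exists psi.
move=> x y; rewrite /psi /s; case Hx: (eA U x); case Hy: (eA U y).
all: rewrite /FS ?eA_add ?cA_add ?dA_addl ?dA_addr ?Bb_addl ?Bb_addr.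
all: rewrite ?(Bb_diag u) ?dA_diag ?(dA_sym _ u y) ?(dA_sym _ u x) ?(Bb_flip u y) ?(Bb_flip u x).
all: rewrite ?dA_ind_compl ?he ?hc ?hk ?dA_xor ?Hx ?Hy ?hUu.
all: rewrite !addbX; btauto.
Qed.

End Step.

Section Iso.
Local Open Scope ring_scope.
Import GRing.Theory.
Variables (n p p' : nat).

Lemma iso_of_cequiv :
  cequiv n (fun i => i < p)%N (fun i => i < p')%N -> graded_iso n p p'.
Proof.
move=> [psi [s [psiA [[psii psiK psiiK] hS]]]].
have hF : forall x y, ftw p' (psi x) (psi y) = ftw p x y (+) s x (+) s y (+) s (bvadd x y).
  by move=> x y; rewrite !ftw_FS hS.
have psiiA : forall x y, psii (bvadd x y) = bvadd (psii x) (psii y).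
  by move=> x y; apply: (can_inj psiK); rewrite psiA !psiiK.
pose sg (b : bool) : R := (-1) ^+ b.
pose phi (a : Oalg n) : Oalg n := [ffun z => sg (s (psii z)) * a (psii z)].
pose phii (a : Oalg n) : Oalg n := [ffun z => sg (s z) * a (psi z)].
exists phi, psi; split; [|split; [|split; [|split; [|split; [|split]]]]].
- by move=> a b; apply/ffunP => z; rewrite !ffunE mulrDr.
- by move=> c a; apply/ffunP => z; rewrite !ffunE mulrCA.
- exists phii => a; apply/ffunP => z; rewrite !ffunE ?psiK ?psiiK; exact: signrMK.
- move=> a b; apply/ffunP => z; rewrite !ffunE mulr_sumr.
  rewrite [RHS](reindex_inj (can_inj psiK)) /=; apply: eq_bigr => x _.
  have Ez : bvadd (psi x) z = psi (bvadd x (psii z)) by rewrite psiA psiiK.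
  rewrite !ffunE Ez !psiK hF.
  have -> : bvadd x (bvadd x (psii z)) = psii z.
    by apply/ffunP => i; rewrite !ffunE addKb.
  rewrite /sg !signr_addb.
  case: (s x); case: (s (bvadd x (psii z))); case: (s (psii z));
    rewrite /= ?expr0 ?expr1; ring.
- exact: (Bijective psiK psiiK).
- exact: psiA.
- move=> x; exists (sg (s x)); apply/ffunP => z; rewrite !ffunE.
  case: eqP => [<-|ne]; first by rewrite psiiK eqxx mulr1.
  case: eqP => [e|]; last by rewrite !mulr0.
  by case: ne; rewrite e psiK.
Qed.
End Iso.

Lemma count_split (Q : pred nat) (L : seq nat) n :
  uniq L -> all (fun i => i < n) L ->
  count (fun i => Q i && ~~ (i \in L)) (iota 0 n) + count Q L = count Q (iota 0 n).
Proof.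
move=> uL aL.
have pe : perm_eq (filter (fun i => i \in L) (iota 0 n)) L.
  apply: uniq_perm; first by rewrite filter_uniq // iota_uniq.
    exact: uL.
  move=> i; rewrite mem_filter mem_iota add0n /=.
  case iL: (i \in L) => //=; by move/allP: aL => /(_ i iL) ->.
rewrite -(permP pe) count_filter -count_predUI.
have -> : count (predI (fun i => Q i && ~~ (i \in L)) (predI Q (fun i => i \in L))) (iota 0 n) = 0.
  by apply/eqP; rewrite -leqn0 leqNgt -has_count; apply/hasPn => i _ /=; case: (i \in L); rewrite ?andbF.
rewrite addn0; apply: eq_count => i /=; by case: (Q i); case: (i \in L).
Qed.

Lemma odd_count_xor (a b : pred nat) s :
  odd (count (fun i => a i (+) b i) s) = odd (count a s) (+) odd (count b s).
Proof.
elim: s => //= i s IH; rewrite !oddD IH !oddb !addbX; btauto.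
Qed.

Lemma count_lt_iota p n : p <= n -> count (fun i => i < p) (iota 0 n) = p.
Proof.
move=> le; rewrite -(subnKC le) iotaD count_cat add0n.
rewrite (eq_in_count (a2 := predT)); last by move=> i; rewrite mem_iota => /andP [_].
rewrite count_predT size_iota (eq_in_count (a2 := pred0)) ?count_pred0 ?addn0 //.
by move=> i; rewrite mem_iota => /andP [h _] /=; rewrite ltnNge h.
Qed.

Lemma oddC2 j : odd 'C(4 * j + 2, 2).
Proof.
have -> : 4 * j + 2 = (2 * j + 1) + (2 * j + 1) by lia.
by rewrite bin2D !oddD addbb /= oddM andbb oddD oddM.
Qed.

Lemma FS_ext n (P Q : pred nat) (x y : bv n) :
  (forall i, i < n -> P i = Q i) -> FS P x y = FS Q x y.
Proof.
move=> h; rewrite /FS; congr (_ (+) _).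
by apply: eq_bigl => i; rewrite h.
Qed.

Lemma cequiv_ext n (P P2 Q Q2 : pred nat) :
  (forall i, i < n -> P i = P2 i) -> (forall i, i < n -> Q i = Q2 i) ->
  cequiv n P Q -> cequiv n P2 Q2.
Proof.
move=> hP hQ [psi [s [h1 [h2 h3]]]]; exists psi, s; split => //; split => //.
by move=> x y; rewrite -(FS_ext _ _ hQ) -(FS_ext _ _ hP).
Qed.

Lemma step_list j (P : pred nat) (L : seq nat) :
  uniq L -> all (fun i => i < 4 * j + 6) L -> size L = 4 ->
  odd (count P (iota 0 (4 * j + 6))) (+) odd (count P L) ->
  cequiv (4 * j + 6) P (fun i => P i (+) (i \in L)).
Proof.
set n := 4 * j + 6 => uL aL sL hP.
have cs := count_split _ uL aL.
have hc : count (fun i => T i && predC (fun i => i \in L) i) (iota 0 n) = 4 * j + 2.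
  have := cs predT; rewrite !count_predT size_iota sL /=.
  rewrite (eq_count (a2 := fun i => true && ~~ (i \in L))) //; rewrite /n; lia.
apply: step.
- by rewrite /eA cnt_ind hc oddD oddM.
- by rewrite /cA cnt_ind hc oddC2.
- rewrite /eA cnt_ind.
  rewrite (eq_count (a2 := fun i => P i && ~~ (i \in L))); last first.
    by move=> i /=; case: (P i); case: (i \in L).
  have := cs P => E.
  have -> : count (fun i => P i && (i \notin L)) (iota 0 n) = count P (iota 0 n) - count P L.
    by rewrite -E addnK.
  by rewrite oddB // -E leq_addl.
Qed.

Lemma count_mem_iota (L : seq nat) n :
  uniq L -> all (fun i => i < n) L -> count (fun i => i \in L) (iota 0 n) = size L.
Proof.
move=> uL aL; have := count_split (fun i => i \in L) uL aL.
rewrite (eq_count (a2 := pred0)); last by move=> i /=; case: (i \in L).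
rewrite count_pred0 add0n => <-.
by rewrite (eq_in_count (a2 := predT)) ?count_predT.
Qed.

Theorem mainTheorem8 (k p q : nat) :
  (p + q = 4 * k + 2)%N -> (1 <= k)%N ->
  ((odd p /\ odd q /\ (1 <= p)%N /\ (5 <= q)%N -> graded_iso (p + q) p (p + 4))
   /\
   (~~ odd p /\ ~~ odd q /\ (4 <= p)%N /\ (2 <= q)%N -> graded_iso (p + q) p (p - 2))).
Proof.
move=> hn hk.
have Hn : p + q = 4 * (k - 1) + 6 by lia.
rewrite Hn; set j := k - 1.
split.
- move=> [op [oq [p1 q5]]].
  apply: iso_of_cequiv.
  apply: (cequiv_ext (P := fun i => i < p + 0)
            (Q := fun i => (i < p + 0) (+) (i \in [:: p + 0; p + 1; p + 2; p + 3]))).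
  + by move=> i _; rewrite addn0.
  + by move=> i _; rewrite !inE; lia.
  apply: step_list => //.
  + by rewrite /= !inE !eqn_add2l.
  + rewrite /=; lia.
  + rewrite count_lt_iota; last by lia.
    by rewrite /= !ltn_add2l /= addn0 op.
- move=> [op [oq [p4 q2]]].
  have [r Er] : exists r, p = r + 4 by exists (p - 4); lia.
  rewrite Er in op p4 q2 Hn *.
  have aL : forall L : seq nat, all (fun i => i < r + 6) L -> all (fun i => i < 4 * j + 6) L.
    by move=> L /allP h; apply/allP => i /h; lia.
  set L1 := [:: r + 0; r + 1; r + 2; r + 4].
  set L2 := [:: r + 0; r + 2; r + 3; r + 5].
  set L3 := [:: r + 1; r + 2; r + 4; r + 5].
  have u1 : uniq L1 by rewrite /L1 /= !inE !eqn_add2l.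
  have u2 : uniq L2 by rewrite /L2 /= !inE !eqn_add2l.
  have u3 : uniq L3 by rewrite /L3 /= !inE !eqn_add2l.
  have a1 : all (fun i => i < 4 * j + 6) L1 by apply: aL; rewrite /L1 /=; lia.
  have a2 : all (fun i => i < 4 * j + 6) L2 by apply: aL; rewrite /L2 /=; lia.
  have a3 : all (fun i => i < 4 * j + 6) L3 by apply: aL; rewrite /L3 /=; lia.
  have c1 := count_mem_iota u1 a1.
  have c2 := count_mem_iota u2 a2.
  have c3 := count_mem_iota u3 a3.
  have c0 : count (fun i => i < r + 4) (iota 0 (4 * j + 6)) = r + 4.
    by apply: count_lt_iota; lia.
  have er : odd (r + 4) = false by apply/negbTE.
  apply: iso_of_cequiv.
  apply: (cequiv_ext (P := fun i => i < r + 4)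
     (Q := fun i => (i < r + 4) (+) (i \in L1) (+) (i \in L2) (+) (i \in L3))) => //.
    move=> i _; rewrite /L1 /L2 /L3 !inE.
    have [lt|ge] := ltnP i r.
      have F : forall c, (i == r + c) = false by move=> c; apply: ltn_eqF; apply: ltn_addr.
      rewrite !F (ltn_addr _ lt); apply/esym/idP; rewrite -addnBA //; exact: ltn_addr.
    rewrite -(subnKC ge) !eqn_add2l !ltn_add2l -addnBA // ltn_add2l.
    by case: (i - r) => [|[|[|[|[|[|d]]]]]].
  apply: (cequiv_trans (step_list u1 a1 (erefl _) _)).
    by rewrite c0 er /L1 /= !ltn_add2l.
  apply: (cequiv_trans (step_list u2 a2 (erefl _) _)).
    by rewrite odd_count_xor c0 c1 er /L1 /L2 /= !inE !eqn_add2l !ltn_add2l.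
  apply: (step_list u3 a3 (erefl _) _).
  by rewrite !odd_count_xor c0 c1 c2 er /L1 /L2 /L3 /= !inE !eqn_add2l !ltn_add2l.
Qed.
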